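(* Let $n\ge 3$ and $x\in S_n$ avoid $132$. Then there exists $1\le i\le n-2$ with $|\mathrm{Act}_i(x;132)|=|\mathrm{Act}_{i+1}(x;132)|\le|\mathrm{Act}_{i+2}(x;132)|$ if and only if $x$ contains the bivincular pattern $123^{\star}$.
   Context: For $w=w_1\cdots w_{m}\in S_{m}$ and $1\le i\le m+1$, let $w^i$ be the permutation obtained by inserting $m+1$ immediately before $w_i$ (at the end if $i=m+1$). For a pattern $y$, site $i$ of $w$ is active with respect to $y$ if $w^i$ avoids $y$ (has no subsequence order-isomorphic to $y$). For $x\in S_n$ and $1\le k\le n$, let $\mathrm{small}_k(x)$ be the subsequence of $x$ formed by the entries $1,\dots,k$ (a permutation in $S_k$). For $1\le j\le n$, $\mathrm{Act}_j(x;y)$ is the set of active sites of $\mathrm{small}_{n+1-j}(x)$ with respect to $y$. An occurrence of the bivincular pattern $123^{\star}$ in $x$ is a pair of indices $a<b<n$ with $x_a<x_b$ and $x_{b+1}=x_b+1$. *)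

(* Defs.v *)
From mathcomp Require Import all_boot.
Set Implicit Arguments. Unset Strict Implicit. Unset Printing Implicit Defensive.

(* Permutations are sequences of naturals; x in S_n means perm_eq x (iota 1 n).
   Positions are 1-based in the paper; nth below is 0-based. *)

Definition is_perm (n : nat) (x : seq nat) : bool := perm_eq x (iota 1 n).

Definition order_iso (s y : seq nat) : bool :=
  (size s == size y) &&
  [forall i : 'I_(size y), forall j : 'I_(size y),
     (nth 0 s i < nth 0 s j) == (nth 0 y i < nth 0 y j)].

Definition contains (w y : seq nat) : bool :=
  [exists m : (size w).-tuple bool, order_iso (mask m w) y].

Definition avoids (w y : seq nat) : bool := ~~ contains w y.

(* w^i : insert (size w).+1 immediately before w_i (1-based); at end if i = m+1 *)
Definition insert_max (w : seq nat) (i : nat) : seq nat :=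
  take i.-1 w ++ (size w).+1 :: drop i.-1 w.

Definition active_sites (w y : seq nat) : seq nat :=
  [seq i <- iota 1 (size w).+1 | avoids (insert_max w i) y].

Definition small (k : nat) (x : seq nat) : seq nat := [seq v <- x | v <= k].

Definition nAct (j : nat) (x y : seq nat) : nat :=
  size (active_sites (small ((size x).+1 - j) x) y).

(* occurrence of bivincular 123* : 1-based a < b < n, x_a < x_b, x_{b+1} = x_b + 1 *)
Definition contains_123star (x : seq nat) : Prop :=
  exists a b : nat, a < b /\ b.+1 < size x /\
    nth 0 x a < nth 0 x b /\ nth 0 x b.+1 = (nth 0 x b).+1.

(* Main.v *)
Require Import Defs.
From mathcomp Require Import all_boot zify.
Set Implicit Arguments. Unset Strict Implicit.


Lemma order_iso3 a b c : order_iso [:: a; b; c] [:: 1; 3; 2] = (a < c < b).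
Proof.
apply/idP/idP.
- case/andP=> _ /forallP H.
  have H02 := forallP (H (@Ordinal 3 0 isT)) (@Ordinal 3 2 isT).
  have H21 := forallP (H (@Ordinal 3 2 isT)) (@Ordinal 3 1 isT).
  move: H02 H21 => /= /eqP -> /eqP ->. by [].
- case/andP=> ac cb; apply/andP; split=> //.
  apply/forallP=> -[[|[|[|i]]] Hi] //; apply/forallP=> -[[|[|[|j]]] Hj] //=;
  apply/eqP; lia.
Qed.

Lemma contains132P w : reflect (exists a b c, subseq [:: a; b; c] w /\ a < c < b)
  (contains w [:: 1; 3; 2]).
Proof.
apply: (iffP existsP).
- case=> m Ht.
  have st : subseq (mask m w) w by apply: mask_subseq.
  move: Ht st; case: (mask m w) => [|a [|b [|c [|d t]]]] //;
    try by case/andP.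
  by move=> H st; exists a, b, c; rewrite -order_iso3.
- case=> a [b [c [/subseqP [m Hm E] H]]].
  have Hm' : size m == size w by apply/eqP.
  by exists (Tuple Hm') => /=; rewrite -E order_iso3.
Qed.


Lemma subseq_ins (t p s : seq nat) y : subseq t (p ++ y :: s) ->
  subseq t (p ++ s) \/ exists t1 t2, t = t1 ++ y :: t2 /\ subseq t1 p /\ subseq t2 s.
Proof.
elim: p t => [|z p IH] t H.
- case: t H => [|u t] H; first by left; rewrite sub0seq.
  move: H => /=; case: eqVneq => [->|ne] H; last by left.
  by right; exists [::], t.
- case: t H => [|u t] H; first by left; rewrite sub0seq.
  move: H; rewrite cat_cons /=; case: eqVneq => [->|ne] H.
  + case: (IH _ H) => [H1|[t1 [t2 [-> [H1 H2]]]]]; first by left; rewrite /= ?eqxx.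
    by right; exists (z :: t1), t2; rewrite /= ?eqxx.
  + case: (IH _ H) => [H1|[t1 [t2 [E [H1 H2]]]]].
      by left; rewrite /= ?(negbTE ne).
    right; exists t1, t2; split=> //; split=> //.
    by apply: subseq_trans H1 (subseq_cons _ _).
Qed.

Definition P132 := [:: 1; 3; 2].

Lemma contains_ins p s M : (forall z, z \in p ++ s -> z < M) ->
  contains (p ++ M :: s) P132 =
  contains (p ++ s) P132 || has (fun a => has (fun c => a < c) s) p.
Proof.
move=> HM; apply/contains132P/orP.
- case=> a [b [c [/subseq_ins [H|[t1 [t2 [E [H1 H2]]]]] H']]].
    by left; apply/contains132P; exists a, b, c.
  move: E H1 H2 H'; case: t1 => [|x1 [|x2 [|x3 t1]]] //=.
  + case=> -> <- _ Hs H'.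
    have Hc : c \in s by apply: (mem_subseq Hs); rewrite !inE eqxx orbT.
    have := HM c; rewrite mem_cat Hc orbT => /(_ isT); lia.
  + case=> -> -> <-; rewrite !sub1seq => Ha Hc H'; right.
    apply/hasP; exists x1 => //; apply/hasP; exists c => //; lia.
  + case=> -> -> -> <- Hs _ H'.
    have Hb : x2 \in p by apply: (mem_subseq Hs); rewrite !inE eqxx orbT.
    have := HM x2; rewrite mem_cat Hb /= => /(_ isT); lia.
  + by case=> _ _ _; case: t1.
- case=> [/contains132P [a [b [c [H1 H2]]]]|/hasP [a Ha /hasP [c Hc Hac]]].
    exists a, b, c; split=> //; apply: subseq_trans H1 _.
    by apply: cat_subseq (subseq_refl _) (subseq_cons _ _).
  exists a, M, c; split.
    have -> : [:: a; M; c] = [:: a] ++ M :: [:: c] by [].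
    by apply: cat_subseq; rewrite ?sub1seq //= eqxx sub1seq.
  by rewrite Hac HM // mem_cat Hc orbT.
Qed.


Definition cutok (w : seq nat) (c : nat) : bool :=
  ~~ has (fun a => has (fun b => a < b) (drop c w)) (take c w).
Definition Acnt w := count (cutok w) (iota 0 (size w).+1).
Definition Bcnt w m := count (cutok w) (iota 0 m).

Lemma act_eq w : (forall z, z \in w -> z <= size w) -> avoids w P132 ->
  size (active_sites w P132) = Acnt w.
Proof.
move=> Hb Ha; rewrite /active_sites size_filter /Acnt (iotaDl 1 0) count_map.
apply: eq_count => i /=; rewrite /insert_max add1n /= /avoids -/P132.
rewrite contains_ins ?cat_take_drop; last by move=> z /Hb; rewrite ltnS.
by rewrite (negbTE Ha).
Qed.

Lemma take_cat_size (s1 s2 : seq nat) d : take (size s1 + d) (s1 ++ s2) = s1 ++ take d s2.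
Proof. by elim: s1 => //= x s1 ->. Qed.
Lemma drop_cat_size (s1 s2 : seq nat) d : drop (size s1 + d) (s1 ++ s2) = drop d s2.
Proof. by elim: s1. Qed.

Lemma cut_hi u v M d : (forall z, z \in u ++ v -> z < M) ->
  cutok (u ++ M :: v) (size u + 1 + d) = cutok (u ++ v) (size u + d).
Proof.
move=> HM.
have -> : u ++ M :: v = (u ++ [:: M]) ++ v by rewrite -catA.
have -> : size u + 1 + d = size (u ++ [:: M]) + d by rewrite size_cat.
rewrite /cutok !take_cat_size !drop_cat_size !has_cat /=.
have -> : has (fun b => M < b) (drop d v) = false.
  by apply/hasPn => b /mem_drop Hb; rewrite -leqNgt ltnW // HM // mem_cat Hb orbT.
by rewrite !orbF.
Qed.

Lemma cut_lo u v M c : (forall z, z \in u ++ v -> z < M) -> 0 < c <= size u ->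
  cutok (u ++ M :: v) c = false.
Proof.
case: u => [|a u] HM Hc /=; first by move: Hc => /= /andP [] /leq_trans H /H.
case: c Hc => [|c] Hc //=.
rewrite /cutok /=; apply: negbF; apply/orP; left.
apply/hasP; exists M; last by apply: HM; rewrite inE eqxx.
rewrite drop_cat; case: ifP => Hlt; first by rewrite mem_cat inE eqxx orbT.
move: Hc Hlt => /= Hc Hlt. have E : c - size u = 0 by apply/eqP; rewrite subn_eq0 -ltnS. by rewrite E inE eqxx.
Qed.

Lemma cut0 w : cutok w 0.
Proof. by rewrite /cutok take0. Qed.

Lemma acnt_ins (u v : seq nat) M : (forall z, z \in u ++ v -> z < M) ->
  Acnt (u ++ M :: v) + Bcnt (u ++ v) (size u) = (Acnt (u ++ v)).+1.
Proof.
move=> HM; rewrite /Acnt /Bcnt.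
have E1 : iota 0 (size (u ++ M :: v)).+1 =
    iota 0 (size u).+1 ++ map (addn (size u).+1) (iota 0 (size v).+1).
  rewrite -iotaDl addn0 size_cat /=.
  by congr (_ :: _); rewrite iotaD add1n.
have E2 : iota 0 (size (u ++ v)).+1 =
    iota 0 (size u) ++ map (addn (size u)) (iota 0 (size v).+1).
  rewrite -iotaDl addn0 size_cat -addnS.
  by rewrite iotaD.
rewrite E1 E2 !count_cat !count_map.
have -> : count (cutok (u ++ M :: v)) (iota 0 (size u).+1) = 1.
  rewrite /= cut0 (eq_in_count (a2 := pred0)) ?count_pred0 //.
  by move=> c; rewrite mem_iota /= => Hc; apply: cut_lo => //; rewrite andbC -ltnS.
rewrite (eq_count (a1 := preim _ (cutok (u ++ M :: v)))
                  (a2 := preim (addn (size u)) (cutok (u ++ v)))); last first.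
  move=> d /=; have -> : (size u).+1 + d = size u + 1 + d by rewrite addn1.
  exact: cut_hi.
by rewrite add1n addSn addnC.
Qed.


Lemma bcnt_pos w m : (0 < Bcnt w m) = (0 < m).
Proof. by case: m => [|m] //; rewrite /Bcnt /= cut0. Qed.

Lemma bcnt_mono w k m : k <= m -> Bcnt w k <= Bcnt w m.
Proof. by move=> H; rewrite /Bcnt -(subnKC H) iotaD count_cat leq_addr. Qed.

Lemma bcnt_lo (u v : seq nat) M m : (forall z, z \in u ++ v -> z < M) ->
  m <= (size u).+1 -> Bcnt (u ++ M :: v) m = (0 < m).
Proof.
move=> HM; case: m => [|m] // Hm.
rewrite /Bcnt /= cut0 (eq_in_count (a2 := pred0)) ?count_pred0 //.
move=> c; rewrite mem_iota => Hc; apply: cut_lo => //.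
move: Hc Hm; rewrite add1n !ltnS => /andP [H1 H2] H3.
by rewrite H1 (leq_trans H2 H3).
Qed.

Lemma cut_mid (u v : seq nat) M : (forall z, z \in u ++ v -> z < M) ->
  avoids (u ++ M :: v) P132 -> cutok (u ++ M :: v) (size u).+1.
Proof.
move=> HM; rewrite /avoids contains_ins // negb_or => /andP [_ H].
have := cut_hi 0 HM; rewrite addn0 addn1 => ->.
by rewrite /cutok take_cat_size drop_cat_size take0 drop0 cats0.
Qed.

Lemma bcnt1 (u v : seq nat) M m : (forall z, z \in u ++ v -> z < M) ->
  avoids (u ++ M :: v) P132 ->
  (Bcnt (u ++ M :: v) m == 1) = (0 < m <= (size u).+1).
Proof.
move=> HM Ha; case: (leqP m (size u).+1) => Hm.
  by rewrite bcnt_lo // andbT; case: m {Hm}.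
rewrite andbF; apply/negbTE; rewrite neq_ltn; apply/orP; right.
apply: (@leq_trans (Bcnt (u ++ M :: v) (size u).+2)); last exact: bcnt_mono.
have E : (size u).+2 = (size u).+1 + 1 by rewrite addn1.
rewrite /Bcnt E iotaD count_cat.
have := @bcnt_lo u v M (size u).+1 HM (leqnn _).
by rewrite /Bcnt => ->; rewrite add0n /= cut_mid.
Qed.



Lemma mem_x n x (Hp : is_perm n x) z : (z \in x) = (0 < z <= n).
Proof. by rewrite (perm_mem Hp) mem_iota add1n ltnS. Qed.

Lemma uniq_x n x (Hp : is_perm n x) : uniq x.
Proof. by rewrite (perm_uniq Hp) iota_uniq. Qed.

Lemma size_x n x (Hp : is_perm n x) : size x = n.
Proof. by rewrite (perm_size Hp) size_iota. Qed.

Lemma size_small n x (Hp : is_perm n x) k : k <= n -> size (small k x) = k.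
Proof.
move=> Hk; rewrite /small size_filter.
have /permP -> := Hp.
rewrite -(subnKC Hk) iotaD count_cat.
rewrite (eq_in_count (a2 := predT)); last first.
  by move=> z; rewrite mem_iota add1n ltnS => /andP [_ ->].
rewrite (eq_in_count (a1 := fun v => v <= k) (a2 := pred0)); last first.
  by move=> z; rewrite mem_iota add1n ltnS => /andP [H _] /=; rewrite leqNgt H.
by rewrite count_predT count_pred0 size_iota addn0.
Qed.

Lemma small_le k (x : seq nat) z : z \in small k x -> z <= k.
Proof. by rewrite mem_filter => /andP []. Qed.

Lemma avoids_small x (Ha : avoids x P132) k : avoids (small k x) P132.
Proof.
apply: contra Ha => /contains132P [a [b [c [H1 H2]]]].
apply/contains132P; exists a, b, c; split=> //.
exact: subseq_trans H1 (filter_subseq _ _).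
Qed.

Lemma nAct_small n x (Hp : is_perm n x) (Ha : avoids x P132) j : 0 < j -> nAct j x P132 = Acnt (small (n.+1 - j) x).
Proof.
move=> Hj; rewrite /nAct (size_x Hp) act_eq ?(avoids_small Ha) //.
move=> z /small_le; rewrite (size_small Hp) //; lia.
Qed.

Lemma uniq_mid (p s : seq nat) y : uniq (p ++ y :: s) -> y \notin p /\ y \notin s.
Proof.
rewrite cat_uniq /= => /and3P [_ H /andP [H2 _]]; split=> //.
by apply: contra H => Hy; rewrite /= Hy.
Qed.

Lemma small_notin k (p : seq nat) : k.+1 \notin p -> small k.+1 p = small k p.
Proof.
move=> H; apply: eq_in_filter => z Hz; rewrite leq_eqVlt ltnS.
have -> : (z == k.+1) = false by apply/eqP => E; rewrite -E Hz in H.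
by [].
Qed.

Lemma small_split k (p s : seq nat) : uniq (p ++ k.+1 :: s) ->
  small k.+1 (p ++ k.+1 :: s) = small k p ++ k.+1 :: small k s /\
  small k (p ++ k.+1 :: s) = small k p ++ small k s.
Proof.
move=> /uniq_mid [H1 H2]; rewrite /small !filter_cat /= leqnn ltnn.
by rewrite -!/(small _ _) !small_notin.
Qed.


Lemma step n x k p s : is_perm n x -> avoids x P132 -> x = p ++ k.+1 :: s ->
  Acnt (small k.+1 x) + Bcnt (small k x) (size (small k p)) = (Acnt (small k x)).+1.
Proof.
move=> Hp Ha Ex; have Hu := uniq_x Hp; rewrite Ex in Hu.
have [E1 E2] := small_split Hu; rewrite Ex E1 E2; apply: acnt_ins => z.
by rewrite -E2 -Ex => /small_le; rewrite ltnS.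
Qed.

Lemma sub3 (a b c : nat) p r : a \in p -> c \in r -> subseq [:: a; b; c] (p ++ b :: r).
Proof.
move=> Ha Hc; have -> : [:: a; b; c] = [:: a] ++ b :: [:: c] by [].
by apply: cat_subseq; rewrite ?sub1seq // /= eqxx sub1seq.
Qed.

Lemma no132 x a b c : avoids x P132 -> subseq [:: a; b; c] x -> a < c < b -> False.
Proof.
move=> Ha H1 H2; move/negP: Ha; apply; apply/contains132P.
by exists a, b, c.
Qed.

Lemma witness (x p r : seq nat) k a : x = p ++ k.+1 :: k.+2 :: r -> a \in p -> a <= k ->
  contains_123star x.
Proof.
move=> -> Hap Hak; exists (index a p), (size p).
rewrite !nth_cat index_mem Hap ltnn subnn nth_index //.
have -> : (size p).+1 < size p = false by rewrite ltnNge leqW.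
rewrite subSnn /= size_cat /=; split=> //; split; first by rewrite addnS ltnS addnS ltnS leq_addr.
by rewrite ltnS.
Qed.

Lemma exists_split (x : seq nat) y : y \in x -> exists p s, x = p ++ y :: s.
Proof. by case/splitPr=> p s; exists p, s. Qed.


Theorem theorem3p17 (n : nat) (x : seq nat) :
  3 <= n -> is_perm n x -> avoids x [:: 1; 3; 2] ->
  ((exists i : nat, 1 <= i <= n - 2 /\
      nAct i x [:: 1; 3; 2] = nAct i.+1 x [:: 1; 3; 2] /\
      nAct i.+1 x [:: 1; 3; 2] <= nAct i.+2 x [:: 1; 3; 2])
   <-> contains_123star x).
Proof.
move=> Hn Hp Ha; have Hu := uniq_x Hp.
split.
- case=> i [/andP [Hi1 Hi2] [E1 E2]].
  rewrite !(nAct_small Hp Ha) // in E1 E2.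
  set k := n - i.+1 in E1 E2.
  have Ek2 : n.+1 - i = k.+2 by rewrite /k; lia.
  have Ek1 : n.+1 - i.+1 = k.+1 by rewrite /k; lia.
  have Ek0 : n.+1 - i.+2 = k by rewrite /k; lia.
  rewrite Ek2 Ek1 Ek0 in E1 E2.
  have Hk0 : 0 < k by rewrite /k; lia.
  have Hkn : k.+2 <= n by rewrite /k; lia.
  have [p [s Ex]] : exists p s, x = p ++ k.+1 :: s.
    by apply: exists_split; rewrite (mem_x Hp); lia.
  have S1 := step Hp Ha Ex.
  have Hpos : 0 < size (small k p).
    rewrite -(bcnt_pos (small k x)); lia.
  have [a Hap Hak] : exists2 a, a \in p & a <= k.
    by move: Hpos; rewrite /small size_filter -has_count => /hasP [a Ha1 Ha2]; exists a.
  have Hk2 : k.+2 \in p ++ k.+1 :: s by rewrite -Ex (mem_x Hp); lia.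
  have Hne : (k.+2 == k.+1) = false by apply/eqP; lia.
  rewrite mem_cat inE Hne /= in Hk2.
  have Hu' : uniq (p ++ k.+1 :: s) by rewrite -Ex.
  have [E0 E0'] := small_split Hu'; rewrite -Ex in E0 E0'.
  have Hav1 : avoids (small k p ++ k.+1 :: small k s) P132.
    by rewrite -E0; apply: (avoids_small Ha).
  have HM1 : forall z, z \in small k p ++ small k s -> z < k.+1.
    by move=> z; rewrite -E0' => /small_le; rewrite ltnS.
  have [Hnp _] := uniq_mid Hu'.
  case/orP: Hk2 => Hk2.
  + have [p1 [p2 Ep]] := exists_split Hk2.
    have Ex2 : x = p1 ++ k.+2 :: (p2 ++ k.+1 :: s) by rewrite Ex Ep -catA.
    have S2 := step Hp Ha Ex2.
    have HB : Bcnt (small k.+1 x) (size (small k.+1 p1)) == 1 by apply/eqP; lia.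
    rewrite E0 bcnt1 // in HB; case/andP: HB => Hpos1 _.
    move: Hpos1; rewrite /small size_filter -has_count => /hasP [a' Ha'1 Ha'2].
    have Ha'k : a' != k.+1.
      by apply: contraNneq Hnp => <-; rewrite Ep mem_cat Ha'1.
    exfalso; apply: (@no132 x a' k.+2 k.+1 Ha).
      by rewrite Ex2; apply: sub3 => //; rewrite mem_cat inE eqxx orbT.
    by rewrite ltnSn andbT ltn_neqAle Ha'k Ha'2.
  + have [s1 [s2 Es]] := exists_split Hk2.
    have Ex2 : x = (p ++ k.+1 :: s1) ++ k.+2 :: s2 by rewrite Ex Es -catA.
    have S2 := step Hp Ha Ex2.
    have HB : Bcnt (small k.+1 x) (size (small k.+1 (p ++ k.+1 :: s1))) == 1.
      by apply/eqP; lia.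
    rewrite E0 bcnt1 // in HB; case/andP: HB => _ HB.
    have Hu2 : uniq ((p ++ k.+1 :: s1) ++ k.+2 :: s2) by rewrite -Ex2.
    have Hs1 : size (small k.+1 s1) = 0.
      move: HB; rewrite /small filter_cat /= leqnn -!/(small _ _) small_notin //.
      rewrite size_cat /=; lia.
    clear S2 HB; case: s1 Es Ex2 Hu2 Hs1 => [|z s1] Es Ex2 Hu2 Hs1.
    * by apply: (@witness x p s2 k a) => //; rewrite Ex Es.
    * exfalso; move: Hs1; rewrite /small /=; case: ifP => // Hz _.
      have [Hz2 _] := uniq_mid Hu2.
      have Hzk : z != k.+2 by apply: contraNneq Hz2 => ->; rewrite mem_cat !inE eqxx !orbT.
      apply: (@no132 x k.+1 z k.+2 Ha).
        have -> : x = (p ++ [:: k.+1]) ++ z :: (s1 ++ k.+2 :: s2) by rewrite Ex2 -!catA.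
        by apply: sub3; rewrite ?mem_cat ?inE ?eqxx ?orbT.
      move/negbT: Hz; rewrite -ltnNge => Hz.
      by rewrite ltnSn /= ltn_neqAle eq_sym Hzk.
- case=> a [b [Hab [Hb [Hlt Heq]]]].
  have Hsx := size_x Hp.
  have Ex : x = take b x ++ nth 0 x b :: nth 0 x b.+1 :: drop b.+2 x.
    by rewrite -drop_nth -?drop_nth ?cat_take_drop //; lia.
  have Hain : nth 0 x a \in take b x.
    by rewrite -(nth_take 0 Hab) mem_nth // size_takel //; exact: ltnW (ltnW Hb).
  have Hxa : nth 0 x a \in x by rewrite mem_nth //; apply: ltn_trans Hab (ltnW Hb).
  have Hxb1 : nth 0 x b.+1 \in x by rewrite mem_nth.
  rewrite (mem_x Hp) in Hxa Hxb1.
  have [k Ek] : exists k, nth 0 x b = k.+1 by case: (nth 0 x b) Hlt => [|k] //; exists k.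
  rewrite Heq Ek in Ex Hxb1; rewrite Ek in Hlt.
  set p := take b x in Ex Hain; set r := drop b.+2 x in Ex.
  have Hak : nth 0 x a <= k by rewrite -ltnS.
  have Hk0 : 0 < k by lia.
  rewrite (mem_x Hp) in Hxb1.
  have Hkn : k.+2 <= n by lia.
  exists (n - k.+1); split; first by apply/andP; lia.
  rewrite !(nAct_small Hp Ha) //; try lia.
  have -> : n.+1 - (n - k.+1) = k.+2 by lia.
  have -> : n.+1 - (n - k.+1).+1 = k.+1 by lia.
  have -> : n.+1 - (n - k.+1).+2 = k by lia.
  have S1 := step Hp Ha Ex.
  have Hpos : 0 < size (small k p).
    by rewrite /small size_filter -has_count; apply/hasP; exists (nth 0 x a).
  have HB1 := Hpos; rewrite -(bcnt_pos (small k x)) in HB1.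
  have Ex2 : x = (p ++ [:: k.+1]) ++ k.+2 :: r by rewrite Ex -catA.
  have S2 := step Hp Ha Ex2.
  have Hu' : uniq (p ++ k.+1 :: k.+2 :: r) by rewrite -Ex.
  have [E0 E0'] := small_split Hu'; rewrite -Ex in E0 E0'.
  have Hav1 : avoids (small k p ++ k.+1 :: small k (k.+2 :: r)) P132.
    by rewrite -E0; apply: (avoids_small Ha).
  have HM1 : forall z, z \in small k p ++ small k (k.+2 :: r) -> z < k.+1.
    by move=> z; rewrite -E0' => /small_le; rewrite ltnS.
  have [Hnp _] := uniq_mid Hu'.
  have HB2 : Bcnt (small k.+1 x) (size (small k.+1 (p ++ [:: k.+1]))) = 1.
    apply/eqP; rewrite E0 bcnt1 //.
    by rewrite /small filter_cat /= leqnn -/(small _ _) small_notin // size_cat addn1 leqnn.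
  split; lia.
Qed.
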